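(* Let $I\subset(0,\infty)$ be an open interval and $K\mapsto\theta^*(K)$, $K\in I$, a continuously differentiable family of stable phase-locked steady states of the Kuramoto network with coupling strength $K$. Let $\lambda_n(K)$, $v_n(K)$ ($n=2,\dots,N$) be the nonzero eigenvalues of the Jacobian $J(K)$ at $\theta^*(K)$ and corresponding orthonormal eigenvectors. Then for every $K\in I$ $$\frac{d r_{\rm uni}(\theta^*(K))}{dK}=\frac{2}{K^2\sum_{i=1}^N k_i}\sum_{n=2}^N\frac{1}{-\lambda_n(K)}\,\big(v_n(K)\cdot\omega\big)^2\;\ge\;0,$$ where $\omega=(\omega_1,\dots,\omega_N)^T$.
   Context: Kuramoto network: $N\ge 2$ oscillators with phases $\theta_i(t)$ obeying $\frac{d\theta_i}{dt}=\omega_i+K\sum_{j=1}^N A_{i,j}\sin(\theta_j-\theta_i)$, where $\omega_i\in\mathbb{R}$ are natural frequencies with $\sum_{i=1}^N\omega_i=0$, $K>0$ is the coupling strength, and $A=(A_{i,j})$ is the symmetric adjacency matrix ($A_{i,j}=A_{j,i}\in\{0,1\}$, $A_{i,i}=0$) of a connected undirected graph; $k_i=\sum_j A_{i,j}$ is the degree of node $i$. A phase-locked steady state is a vector $\theta^*\in\mathbb{R}^N$ with $\omega_i+K\sum_j A_{i,j}\sin(\theta_j^*-\theta_i^* )=0$ for all $i$. Its Jacobian $J$ is the symmetric matrix with $J_{i,j}=KA_{i,j}\cos(\theta_i^*-\theta_j^* )$ for $i\neq j$ and $J_{i,i}=-K\sum_j A_{i,j}\cos(\theta_i^*-\theta_j^*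 )$; it always has eigenvalue $\lambda_1=0$ with eigenvector $(1,\dots,1)^T$. The state is called stable if all remaining eigenvalues $\lambda_2,\dots,\lambda_N$ of $J$ are strictly negative; then $0=\lambda_1>\lambda_2\ge\dots\ge\lambda_N$, with an orthonormal eigenbasis $v_1=(1,\dots,1)^T/\sqrt N, v_2,\dots,v_N$. The order parameter is $r_{\rm uni}=\frac{1}{\sum_i k_i}\sum_{i,j}A_{i,j}\langle\cos(\theta_i-\theta_j)\rangle_t$, which for a steady state equals $r_{\rm uni}(\theta^* )=\frac{1}{\sum_i k_i}\sum_{i,j}A_{i,j}\cos(\theta_i^*-\theta_j^* )$. *)

(* Defs.v *)
From Stdlib Require Import Reals Lra Lia.
Open Scope R_scope.

(* Nodes and eigen-indices are 0-based: i = 0 .. N-1.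
   Vectors in R^N are functions nat -> R (only indices < N matter),
   matrices are functions nat -> nat -> R. *)

Fixpoint sumN (n : nat) (f : nat -> R) : R :=
  match n with
  | O => 0
  | S m => sumN m f + f m
  end.

Inductive reach (N : nat) (A : nat -> nat -> R) (i : nat) : nat -> Prop :=
  | reach_refl : reach N A i i
  | reach_step : forall j k, reach N A i j -> (k < N)%nat -> A j k = 1 -> reach N A i k.

Definition adjacency (N : nat) (A : nat -> nat -> R) : Prop :=
  (forall i j, (i < N)%nat -> (j < N)%nat -> A i j = 0 \/ A i j = 1) /\
  (forall i j, (i < N)%nat -> (j < N)%nat -> A i j = A j i) /\
  (forall i, (i < N)%nat -> A i i = 0) /\
  (forall i j, (i < N)%nat -> (j < N)%nat -> reach N A i j).

Definition degree (N : nat) (A : nat -> nat -> R) (i : nat) : R :=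
  sumN N (fun j => A i j).

Definition steady_state (N : nat) (A : nat -> nat -> R) (omega : nat -> R)
  (K : R) (th : nat -> R) : Prop :=
  forall i, (i < N)%nat ->
    omega i + K * sumN N (fun j => A i j * sin (th j - th i)) = 0.

Definition jac (N : nat) (A : nat -> nat -> R) (K : R) (th : nat -> R)
  (i j : nat) : R :=
  if Nat.eqb i j then - K * sumN N (fun l => A i l * cos (th i - th l))
  else K * A i j * cos (th i - th j).

(* lam, v give an orthonormal eigenbasis v_0 = (1,..,1)/sqrt N, v_1, .., v_{N-1}
   of the symmetric matrix M with eigenvalues lam 0 = 0 > lam 1, ..., lam (N-1)
   (i.e. the paper's v_1..v_N, lambda_1..lambda_N, shifted to 0-based indices);
   v n i is the i-th coordinate of the n-th eigenvector. *)
Definition stable_eigbasis (N : nat) (M : nat -> nat -> R)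
  (lam : nat -> R) (v : nat -> nat -> R) : Prop :=
  (forall i, (i < N)%nat -> v 0%nat i = 1 / sqrt (INR N)) /\
  lam 0%nat = 0 /\
  (forall n, (1 <= n < N)%nat -> lam n < 0) /\
  (forall n, (n < N)%nat -> forall i, (i < N)%nat ->
       sumN N (fun j => M i j * v n j) = lam n * v n i) /\
  (forall n m, (n < N)%nat -> (m < N)%nat ->
       sumN N (fun i => v n i * v m i) = if Nat.eqb n m then 1 else 0).

(* stability: all eigenvalues of J other than the trivial eigenvalue 0
   (eigenvector (1,..,1)) are strictly negative; for a symmetric matrix this
   is the existence of such an orthonormal eigenbasis (spectral theorem). *)
Definition stable (N : nat) (A : nat -> nat -> R) (K : R) (th : nat -> R) : Prop :=
  exists lam v, stable_eigbasis N (jac N A K th) lam v.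

Definition r_uni (N : nat) (A : nat -> nat -> R) (th : nat -> R) : R :=
  / sumN N (degree N A) *
  sumN N (fun i => sumN N (fun j => A i j * cos (th i - th j))).

Definition open_interval_pos (I : R -> Prop) : Prop :=
  (forall x, I x -> 0 < x) /\
  (forall x y z, I x -> I z -> x <= y <= z -> I y) /\
  (forall x, I x -> exists d, 0 < d /\ forall y, Rabs (y - x) < d -> I y).

(* Main.v *)
Require Import Defs.
From Stdlib Require Import Reals.
From Stdlib Require Import Lra Lia IndefiniteDescription.
From mathcomp Require all_boot all_algebra Rstruct.
Module MC.
Import all_boot all_algebra Rstruct.
Import GRing.Theory.
Local Open Scope ring_scope.

Lemma sumN_big (n : nat) (f : nat -> R) : sumN n f = \sum_(i < n) f i.
Proof.
elim: n => [|n IH] /=; first by rewrite big_ord0.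
by rewrite big_ord_recr /= IH.
Qed.

Lemma complete (N : nat) (v : nat -> nat -> R) :
  (forall n m, (n < N)%N -> (m < N)%N ->
     sumN N (fun i => v n i * v m i) = if Nat.eqb n m then 1 else 0) ->
  forall i j, (i < N)%N -> (j < N)%N ->
     sumN N (fun n => v n i * v n j) = if Nat.eqb i j then 1 else 0.
Proof.
move=> H i j Hi Hj.
pose V : 'M[R]_N := \matrix_(n < N, k < N) v n k.
have E : V *m V^T = 1%:M.
  apply/matrixP => a b; rewrite !mxE.
  under eq_bigr do rewrite !mxE.
  rewrite -(sumN_big _ (fun k => v a k * v b k)) H //.
  case: (PeanoNat.Nat.eqb_spec a b) => [/val_inj -> | ne]; first by rewrite eqxx.
  by case: eqP => // E; case: ne; rewrite E.
have := mulmx1C E => /matrixP /(_ (Ordinal Hi) (Ordinal Hj)); rewrite !mxE.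
  under eq_bigr do rewrite !mxE.
  rewrite -(sumN_big _ (fun k => v k i * v k j)) /= => ->.
rewrite /=.
case: (PeanoNat.Nat.eqb_spec i j) => [e | ne].
  by subst j; rewrite (bool_irrelevance Hi Hj) eqxx.
by case: eqP => // -[] e; case: ne.
Qed.
End MC.


Open Scope R_scope.

Lemma completeR (N : nat) (v : nat -> nat -> R) :
  (forall n m, (n < N)%nat -> (m < N)%nat ->
     sumN N (fun i => v n i * v m i) = if Nat.eqb n m then 1 else 0) ->
  forall i j, (i < N)%nat -> (j < N)%nat ->
     sumN N (fun n => v n i * v n j) = if Nat.eqb i j then 1 else 0.
Proof.
intros H i j Hi Hj.
apply (MC.complete N v).
- intros n m Hn Hm. apply H; apply (ssr.ssrbool.elimT ssrnat.ltP); assumption.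
- apply (ssr.ssrbool.introT ssrnat.ltP); assumption.
- apply (ssr.ssrbool.introT ssrnat.ltP); assumption.
Qed.

Lemma sumN_ext n f g : (forall i, (i < n)%nat -> f i = g i) -> sumN n f = sumN n g.
Proof. induction n; simpl; intros H; auto. rewrite IHn by (intros; apply H; lia). rewrite H by lia. reflexivity. Qed.

Lemma sumN_plus n f g : sumN n (fun i => f i + g i) = sumN n f + sumN n g.
Proof. induction n; simpl; [lra|rewrite IHn; lra]. Qed.

Lemma sumN_minus n f g : sumN n (fun i => f i - g i) = sumN n f - sumN n g.
Proof. induction n; simpl; [lra|rewrite IHn; lra]. Qed.

Lemma sumN_opp n f : sumN n (fun i => - f i) = - sumN n f.
Proof. induction n; simpl; [lra|rewrite IHn; lra]. Qed.

Lemma sumN_scal n c f : sumN n (fun i => c * f i) = c * sumN n f.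
Proof. induction n; simpl; [lra|rewrite IHn; lra]. Qed.

Lemma sumN_scalr n c f : sumN n (fun i => f i * c) = sumN n f * c.
Proof. induction n; simpl; [lra|rewrite IHn; lra]. Qed.

Lemma sumN_swap n m F : sumN n (fun i => sumN m (fun j => F i j)) = sumN m (fun j => sumN n (fun i => F i j)).
Proof. induction n; simpl.
- induction m; simpl; [lra|rewrite <- IHm; lra].
- rewrite IHn. rewrite <- sumN_plus. reflexivity. Qed.

Lemma sumN_delta n i f : (i < n)%nat -> sumN n (fun j => if Nat.eqb i j then f j else 0) = f i.
Proof. induction n; intros H; [lia|simpl].
destruct (Nat.eqb_spec i n).
- subst. rewrite (sumN_ext _ _ (fun _ => 0)). 2:{ intros j Hj. destruct (Nat.eqb_spec n j); [lia|reflexivity]. }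
  assert (sumN n (fun _ => 0) = 0) by (clear; induction n; simpl; [lra|rewrite IHn; lra]). lra.
- rewrite IHn by lia. lra. Qed.

Lemma sumN_nonneg n f : (forall i, (i < n)%nat -> 0 <= f i) -> 0 <= sumN n f.
Proof. induction n; simpl; intros H; [lra|]. assert (0 <= f n) by (apply H; lia).
 assert (0 <= sumN n f) by (apply IHn; intros; apply H; lia). lra. Qed.

Lemma derive_sumN n (F : R -> nat -> R) (d : nat -> R) x :
  (forall i, (i < n)%nat -> derivable_pt_lim (fun t => F t i) x (d i)) ->
  derivable_pt_lim (fun t => sumN n (F t)) x (sumN n d).
Proof. induction n; simpl; intros H.
- apply derivable_pt_lim_const.
- apply (derivable_pt_lim_plus (fun t => sumN n (F t)) (fun t => F t n)).
  + apply IHn; intros; apply H; lia.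
  + apply H; lia. Qed.

Lemma deriv_local_zero (f : R -> R) x d l :
  0 < d -> (forall y, Rabs (y - x) < d -> f y = 0) -> derivable_pt_lim f x l -> l = 0.
Proof.
intros Hd Hz Hl.
destruct (Req_dec l 0) as [|Hne]; auto. exfalso.
assert (He : 0 < Rabs l) by (apply Rabs_pos_lt; auto).
destruct (Hl (Rabs l) He) as [del Hdel].
set (h := Rmin del d / 2).
assert (Hm1 : 0 < Rmin del d) by (apply Rmin_pos; [apply (cond_pos del)|auto]).
assert (hpos : 0 < h) by (unfold h; lra).
assert (hlt : Rabs h < del).
{ rewrite Rabs_right by lra. unfold h. pose proof (Rmin_l del d). lra. }
specialize (Hdel h (Rgt_not_eq _ _ hpos) hlt).
rewrite (Hz (x + h)) in Hdel. 2:{ replace (x + h - x) with h by ring. rewrite Rabs_right by lra. unfold h. pose proof (Rmin_r del d). lra. }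
rewrite (Hz x) in Hdel. 2:{ replace (x - x) with 0 by ring. rewrite Rabs_R0. lra. }
replace ((0 - 0) / h - l) with (- l) in Hdel by (field; lra).
rewrite Rabs_Ropp in Hdel. lra.
Qed.

Lemma d_sin_diff (a b : R -> R) da db x :
  derivable_pt_lim a x da -> derivable_pt_lim b x db ->
  derivable_pt_lim (fun t => sin (a t - b t)) x (cos (a x - b x) * (da - db)).
Proof.
intros Ha Hb.
apply (derivable_pt_lim_comp (fun t => a t - b t) sin x (da - db) (cos (a x - b x))).
- apply (derivable_pt_lim_minus a b); auto.
- apply derivable_pt_lim_sin.
Qed.

Lemma d_cos_diff (a b : R -> R) da db x :
  derivable_pt_lim a x da -> derivable_pt_lim b x db ->
  derivable_pt_lim (fun t => cos (a t - b t)) x (- sin (a x - b x) * (da - db)).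
Proof.
intros Ha Hb.
apply (derivable_pt_lim_comp (fun t => a t - b t) cos x (da - db) (- sin (a x - b x))).
- apply (derivable_pt_lim_minus a b); auto.
- apply derivable_pt_lim_cos.
Qed.

Lemma dl_eq f x l l' : derivable_pt_lim f x l -> l = l' -> derivable_pt_lim f x l'.
Proof. intros H ->; exact H. Qed.

Theorem lemma2 (N : nat) (A : nat -> nat -> R) (omega : nat -> R)
  (I : R -> Prop) (theta : R -> nat -> R)
  (lam : R -> nat -> R) (v : R -> nat -> nat -> R) :
  (2 <= N)%nat ->
  adjacency N A ->
  sumN N omega = 0 ->
  open_interval_pos I ->
  (forall i, (i < N)%nat -> exists dth : R -> R,
      (forall K, I K -> derivable_pt_lim (fun t => theta t i) K (dth K)) /\
      (forall K, I K -> continuity_pt dth K)) ->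
  (forall K, I K -> steady_state N A omega K (theta K)) ->
  (forall K, I K -> stable N A K (theta K)) ->
  (forall K, I K -> stable_eigbasis N (jac N A K (theta K)) (lam K) (v K)) ->
  forall K, I K ->
    let D := 2 / (K ^ 2 * sumN N (degree N A)) *
             sumN N (fun n => if Nat.eqb n 0 then 0 else
                       / (- lam K n) * (sumN N (fun i => v K n i * omega i)) ^ 2) in
    derivable_pt_lim (fun t => r_uni N A (theta t)) K D /\ 0 <= D.
Proof.
intros HN Hadj Hsum HI Hder Hss _ Heig K HK D.
destruct Hadj as [A01 [Asym [Adiag _]]].
destruct HI as [Hpos [_ Hopen]].
assert (HKp : 0 < K) by auto.
assert (Hd : forall i, exists l, (i < N)%nat -> derivable_pt_lim (fun t => theta t i) K l).
{ intro i. destruct (Compare_dec.lt_dec i N) as [Hi|Hi].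
  - destruct (Hder i Hi) as [dth [H1 _]]. exists (dth K). auto.
  - exists 0. intros; lia. }
destruct (@functional_choice _ _ _ Hd) as [d Hdd]. clear Hd Hder.
destruct (Heig K HK) as [Hv0 [Hl0 [Hlneg [Heigv Horth]]]].
pose (th := theta K).
assert (SA : forall i, (i < N)%nat ->
   sumN N (fun j => A i j * sin (th j - th i)) +
   K * sumN N (fun j => A i j * cos (th i - th j) * (d j - d i)) = 0).
{ intros i Hi. destruct (Hopen K HK) as [del [Hdel Hnb]].
  apply (deriv_local_zero (fun t => omega i + t * sumN N (fun j => A i j * sin (theta t j - theta t i))) K del); auto.
  - intros y Hy. apply (Hss y (Hnb y Hy) i Hi).
  - apply (dl_eq _ _ (0 + (1 * sumN N (fun j => A i j * sin (th j - th i)) + K * sumN N (fun j => A i j * (cos (th j - th i) * (d j - d i)))))).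
    + apply (derivable_pt_lim_plus (fun _ => omega i)). apply derivable_pt_lim_const.
      apply (derivable_pt_lim_mult (fun t => t) (fun t => sumN N (fun j => A i j * sin (theta t j - theta t i)))).
      apply derivable_pt_lim_id.
      apply (derive_sumN N (fun t j => A i j * sin (theta t j - theta t i))).
      intros j Hj. apply (derivable_pt_lim_scal (fun t => sin (theta t j - theta t i))).
      apply d_sin_diff; auto.
    + rewrite (sumN_ext N (fun j => A i j * (cos (th j - th i) * (d j - d i))) (fun j => A i j * cos (th i - th j) * (d j - d i))).
      ring.
      intros j _. replace (th j - th i) with (- (th i - th j)) by ring. rewrite cos_neg. ring. }
assert (SW : forall i, (i < N)%nat -> omega i = - K * sumN N (fun j => A i j * sin (th j - th i))).
{ intros i Hi. pose proof (Hss K HK i Hi) as H. unfold th. lra. }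
assert (Jdec : forall i j, (i < N)%nat -> (j < N)%nat ->
  jac N A K th i j = K * A i j * cos (th i - th j) +
     (if Nat.eqb i j then - K * sumN N (fun l => A i l * cos (th i - th l)) else 0)).
{ intros i j Hi Hj. unfold jac. destruct (Nat.eqb_spec i j).
  - subst. rewrite Adiag by auto. ring.
  - ring. }
assert (Jsym : forall i j, (i < N)%nat -> (j < N)%nat -> jac N A K th i j = jac N A K th j i).
{ intros i j Hi Hj. rewrite (Jdec i j), (Jdec j i) by auto.
  destruct (Nat.eqb_spec i j); destruct (Nat.eqb_spec j i); try lia.
  - subst. ring.
  - rewrite Asym by auto. replace (th j - th i) with (- (th i - th j)) by ring. rewrite cos_neg. ring. }
assert (SB : forall i, (i < N)%nat -> sumN N (fun j => jac N A K th i j * d j) = omega i / K).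
{ intros i Hi.
  rewrite (sumN_ext N _ (fun j => K * (A i j * cos (th i - th j) * d j) +
      (if Nat.eqb i j then (- K * sumN N (fun l => A i l * cos (th i - th l))) * d j else 0))).
  2:{ intros j Hj. rewrite Jdec by auto. destruct (Nat.eqb i j); ring. }
  rewrite sumN_plus, sumN_scal, (sumN_delta N i (fun j => (- K * sumN N (fun l => A i l * cos (th i - th l))) * d j)) by auto.
  pose proof (SA i Hi) as H. rewrite SW by auto.
  rewrite (sumN_ext N (fun j => A i j * cos (th i - th j) * (d j - d i)) (fun j => A i j * cos (th i - th j) * d j - A i j * cos (th i - th j) * d i)) in H by (intros; ring).
  rewrite sumN_minus, sumN_scalr in H.
  set (Sn := sumN N (fun j : nat => A i j * sin (th j - th i))) in *.
  set (X := sumN N (fun i0 : nat => A i i0 * cos (th i - th i0) * d i0)) in *.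
  set (Y := sumN N (fun l : nat => A i l * cos (th i - th l))) in *.
  replace (- K * Sn / K) with (- Sn) by (field; lra). lra. }
set (G := sumN N (fun i => sumN N (fun j => A i j * (- sin (th i - th j) * (d i - d j))))).
assert (HG : G = 2 * sumN N (fun i => sumN N (fun j => A i j * sin (th j - th i)) * d i)).
{ unfold G.
  rewrite (sumN_ext N _ (fun i => sumN N (fun j => A i j * sin (th j - th i)) * d i
                 - sumN N (fun j => A i j * sin (th j - th i) * d j))).
  2:{ intros i Hi. rewrite <- sumN_scalr, <- sumN_minus. apply sumN_ext. intros j Hj.
      replace (th j - th i) with (- (th i - th j)) by ring. rewrite sin_neg. ring. }
  rewrite sumN_minus.
  rewrite (sumN_swap N N (fun i j => A i j * sin (th j - th i) * d j)).
  rewrite (sumN_ext N (fun j => sumN N (fun i => A i j * sin (th j - th i) * d j))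
     (fun j => - (sumN N (fun i => A j i * sin (th i - th j)) * d j))).
  2:{ intros j Hj. rewrite <- sumN_scalr, <- sumN_opp. apply sumN_ext. intros i Hi.
      rewrite Asym by auto. replace (th j - th i) with (- (th i - th j)) by ring. rewrite sin_neg. ring. }
  rewrite sumN_opp. ring. }
assert (HG2 : G = - (2 / K) * sumN N (fun i => omega i * d i)).
{ rewrite HG. rewrite <- sumN_scal, <- sumN_scal. apply sumN_ext. intros i Hi.
  rewrite (SW i Hi). field. lra. }
change (jac N A K (theta K)) with (jac N A K th) in Heigv.
assert (SD : forall n, (n < N)%nat -> sumN N (fun i => v K n i * omega i) = K * lam K n * sumN N (fun i => v K n i * d i)).
{ intros n Hn.
  rewrite (sumN_ext N _ (fun i => K * sumN N (fun j => v K n i * jac N A K th i j * d j))).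
  2:{ intros i Hi. rewrite <- sumN_scal.
      replace (omega i) with (K * (omega i / K)) by (field; lra). rewrite <- (SB i Hi).
      rewrite <- sumN_scal, <- sumN_scal. apply sumN_ext. intros; ring. }
  rewrite sumN_scal, sumN_swap.
  rewrite (sumN_ext N _ (fun j => lam K n * (v K n j * d j))).
  2:{ intros j Hj. rewrite <- (Rmult_assoc (lam K n)), <- (Heigv n Hn j Hj), <- sumN_scalr.
      apply sumN_ext. intros i Hi. rewrite (Jsym i j) by auto. ring. }
  rewrite sumN_scal. ring. }
assert (SE : sumN N (fun i => omega i * d i) =
   sumN N (fun n => sumN N (fun i => v K n i * omega i) * sumN N (fun j => v K n j * d j))).
{ rewrite (sumN_ext N (fun n => sumN N (fun i => v K n i * omega i) * sumN N (fun j => v K n j * d j))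
     (fun n => sumN N (fun i => sumN N (fun j => v K n i * omega i * (v K n j * d j))))).
  2:{ intros n Hn. rewrite <- sumN_scalr. apply sumN_ext. intros i Hi. rewrite <- sumN_scal. reflexivity. }
  rewrite sumN_swap.
  apply sumN_ext. intros i Hi.
  rewrite sumN_swap.
  rewrite (sumN_ext N _ (fun j => if Nat.eqb i j then omega i * d j else 0)).
  2:{ intros j Hj.
      rewrite (sumN_ext N _ (fun n => (omega i * d j) * (v K n i * v K n j))) by (intros; ring).
      rewrite sumN_scal, (completeR N (v K)) by auto. destruct (Nat.eqb i j); ring. }
  rewrite (sumN_delta N i (fun j => omega i * d j)) by auto. reflexivity. }
set (Sdeg := sumN N (degree N A)).
set (Q := sumN N (fun n => if Nat.eqb n 0 then 0 else
                       / (- lam K n) * (sumN N (fun i => v K n i * omega i)) ^ 2)).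
assert (SF : sumN N (fun i => omega i * d i) = - (1 / K) * Q).
{ rewrite SE. unfold Q. rewrite <- sumN_scal. apply sumN_ext. intros n Hn.
  destruct (Nat.eqb_spec n 0).
  - subst. rewrite (sumN_ext N _ (fun i => 1 / sqrt (INR N) * omega i)) by (intros; rewrite Hv0 by auto; ring).
    rewrite sumN_scal, Hsum. ring.
  - assert (Hl : lam K n < 0) by (apply Hlneg; lia).
    rewrite SD by auto. field. lra. }
split.
- unfold r_uni. fold Sdeg.
  apply (dl_eq _ _ (/ Sdeg * G)).
  + apply (derivable_pt_lim_scal (fun t => sumN N (fun i => sumN N (fun j => A i j * cos (theta t i - theta t j))))).
    apply (derive_sumN N (fun t i => sumN N (fun j => A i j * cos (theta t i - theta t j)))).
    intros i Hi.
    apply (derive_sumN N (fun t j => A i j * cos (theta t i - theta t j))).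
    intros j Hj. apply (derivable_pt_lim_scal (fun t => cos (theta t i - theta t j))).
    apply d_cos_diff; auto.
  + unfold D. fold Sdeg. fold Q. rewrite HG2, SF.
    destruct (Req_dec Sdeg 0) as [E0|E0].
    * rewrite E0, Rmult_0_r. unfold Rdiv. rewrite Rinv_0. ring.
    * field. split; lra.
- unfold D. fold Sdeg. fold Q.
  assert (HS : 0 <= Sdeg).
  { unfold Sdeg. apply sumN_nonneg. intros i Hi. unfold degree. apply sumN_nonneg.
    intros j Hj. destruct (A01 i j Hi Hj) as [E|E]; rewrite E; lra. }
  assert (HQ : 0 <= Q).
  { unfold Q. apply sumN_nonneg. intros n Hn. destruct (Nat.eqb_spec n 0); [lra|].
    assert (Hl : lam K n < 0) by (apply Hlneg; lia).
    apply Rmult_le_pos. left; apply Rinv_0_lt_compat; lra.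
    apply pow2_ge_0. }
  destruct (Req_dec Sdeg 0) as [E0|E0].
  + rewrite E0, Rmult_0_r. unfold Rdiv. rewrite Rinv_0. lra.
  + apply Rmult_le_pos; auto. unfold Rdiv. apply Rmult_le_pos; [lra|].
    left. apply Rinv_0_lt_compat. apply Rmult_lt_0_compat; [|lra]. nra.
Qed.
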